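(* Let $\kappa=\lambda^+$ with $\lambda$ a regular cardinal, and let $T$ be a tree of height $\kappa$ and size $\kappa$ which has at most $\kappa$ cofinal branches and in which every node has $\kappa$ many successors. Let $\langle b_\alpha:\alpha<\kappa\rangle$ be an enumeration of the cofinal branches of $T$, for each $\alpha<\kappa$ let $s_\alpha$ be the $\leq_T$-least element of $b_\alpha\setminus\bigcup_{\beta<\alpha}b_\beta$, and let $T^\star=\{t\in T:\neg\exists\alpha\,(s_\alpha<_T t\in b_\alpha)\}$. Assume there is a function $F:T^\star\to\lambda$ such that whenever $x\neq y$ are in $T^\star$ and $F(x)=F(y)$, then $x$ and $y$ are $\leq_T$-incomparable. Then there is $F':T\to\lambda$ with $F'\supseteq F$ such that $F'$ specializes $T$.
   Context: A function $F':T\to\lambda$ specializes $T$ (and $T$ is then called special) if for all $x,y,z\in T$, if $x\leq_T y$, $x\leq_T z$ and $F'(x)=F'(y)=F'(z)$, then $y\leq_T z$ or $z\leq_T y$. *)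

(* Defs.v *)
From Stdlib Require Import Relations Wellfounded.

Definition card_le {X Y : Type} (A : X -> Prop) (B : Y -> Prop) : Prop :=
  exists f : X -> Y, (forall x, A x -> B (f x)) /\
    (forall x y, A x -> A y -> f x = f y -> x = y).

Definition equipotent {X Y : Type} (A : X -> Prop) (B : Y -> Prop) : Prop :=
  exists f : X -> Y, (forall x, A x -> B (f x)) /\
    (forall x y, A x -> A y -> f x = f y -> x = y) /\
    (forall y, B y -> exists x, A x /\ f x = y).

Definition setT_ (X : Type) : X -> Prop := fun _ => True.

Definition strict_wellorder {X : Type} (lt : X -> X -> Prop) : Prop :=
  (forall x, ~ lt x x) /\
  (forall x y z, lt x y -> lt y z -> lt x z) /\
  (forall x y, lt x y \/ x = y \/ lt y x) /\
  well_founded lt.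

Definition initial_seg {X : Type} (lt : X -> X -> Prop) (a : X) : X -> Prop :=
  fun x => lt x a.

(* (X, lt) is (the von Neumann ordinal of) an infinite cardinal:
   a well-order that is infinite and has no initial segment of the same size. *)
Definition is_infinite_cardinal {X : Type} (lt : X -> X -> Prop) : Prop :=
  strict_wellorder lt /\
  card_le (setT_ nat) (setT_ X) /\
  (forall a, ~ card_le (setT_ X) (initial_seg lt a)).

(* the infinite cardinal (X, lt) is regular: cf = itself, i.e. every
   cofinal (unbounded) subset has full cardinality *)
Definition is_regular_cardinal {X : Type} (lt : X -> X -> Prop) : Prop :=
  is_infinite_cardinal lt /\
  forall A : X -> Prop, (forall x, exists y, A y /\ ~ lt y x) ->
    card_le (setT_ X) A.

(* (K, ltK) is the successor cardinal of the cardinal with carrier L: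
   the least ordinal not injecting into L. *)
Definition is_successor_cardinal_of {K L : Type} (ltK : K -> K -> Prop) : Prop :=
  strict_wellorder ltK /\
  (forall a, card_le (initial_seg ltK a) (setT_ L)) /\
  ~ card_le (setT_ K) (setT_ L).

Section Trees.
Context {T : Type} (leT : T -> T -> Prop).

Definition ltT (x y : T) : Prop := leT x y /\ x <> y.

Definition is_tree : Prop :=
  (forall x, leT x x) /\
  (forall x y, leT x y -> leT y x -> x = y) /\
  (forall x y z, leT x y -> leT y z -> leT x z) /\
  (forall t x y, ltT x t -> ltT y t -> leT x y \/ leT y x) /\
  well_founded ltT.

(* ht t is the height of t: the order type of the predecessors of t,
   given as an ordinal below the well-ordered type (K, ltK) *)
Definition is_height_fun {K : Type} (ltK : K -> K -> Prop) (ht : T -> K) : Prop :=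
  forall t, exists f : T -> K,
    (forall x, ltT x t -> ltK (f x) (ht t)) /\
    (forall b, ltK b (ht t) -> exists x, ltT x t /\ f x = b) /\
    (forall x y, ltT x t -> ltT y t -> (ltT x y <-> ltK (f x) (f y))).

Definition imm_succ (t : T) : T -> Prop :=
  fun u => ltT t u /\ forall v, ltT t v -> ltT v u -> False.

Definition cofinal_branch {K : Type} (ht : T -> K) (B : T -> Prop) : Prop :=
  (forall x y, B x -> B y -> leT x y \/ leT y x) /\
  (forall x y, B y -> leT x y -> B x) /\
  (forall a : K, exists t, B t /\ ht t = a).

Definition specializes {L : Type} (F' : T -> L) : Prop :=
  forall x y z, leT x y -> leT x z -> F' x = F' y -> F' x = F' z ->
    leT y z \/ leT z y.

End Trees.

Definition is_s {T K : Type} (leT : T -> T -> Prop) (ltK : K -> K -> Prop)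
  (D : K -> Prop) (b : K -> T -> Prop) (a : K) (s : T) : Prop :=
  let S := fun u => b a u /\ ~ (exists c, D c /\ ltK c a /\ b c u) in
  S s /\ forall u, S u -> leT s u.

Definition Tstar {T K : Type} (leT : T -> T -> Prop) (ltK : K -> K -> Prop)
  (D : K -> Prop) (b : K -> T -> Prop) (t : T) : Prop :=
  ~ exists a s, D a /\ is_s leT ltK D b a s /\ ltT leT s t /\ b a t.

(* Main.v *)
Require Import Defs.
From Stdlib Require Import Classical ClassicalEpsilon.

Theorem lemma4p3
  (L : Type) (ltL : L -> L -> Prop) (K : Type) (ltK : K -> K -> Prop)
  (HL : is_regular_cardinal ltL)
  (HK : @is_successor_cardinal_of K L ltK)
  (T : Type) (leT : T -> T -> Prop) (Htree : is_tree leT)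
  (ht : T -> K) (Hht : is_height_fun leT ltK ht)
  (Hheight : forall a : K, exists t, ht t = a)
  (Hsize : equipotent (setT_ T) (setT_ K))
  (Hsucc : forall t, equipotent (imm_succ leT t) (setT_ K))
  (D : K -> Prop) (HD : forall a c, D a -> ltK c a -> D c)
  (b : K -> T -> Prop)
  (Hb_branch : forall a, D a -> cofinal_branch leT ht (b a))
  (Hb_inj : forall a c, D a -> D c -> (forall t, b a t <-> b c t) -> a = c)
  (Hb_onto : forall B, cofinal_branch leT ht B ->
     exists a, D a /\ forall t, B t <-> b a t)
  (F : T -> L)
  (HF : forall x y, Tstar leT ltK D b x -> Tstar leT ltK D b y -> x <> y ->
     F x = F y -> ~ leT x y /\ ~ leT y x) :
  exists F' : T -> L,
    (forall t, Tstar leT ltK D b t -> F' t = F t) /\ specializes leT F'.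
Proof.
  destruct Htree as [Hrefl [Hanti [Htrans [Hlin _]]]].
  destruct HK as [[_ [_ [Htri _]]] _].
  assert (Hcomp : forall u v y, leT u y -> leT v y -> leT u v \/ leT v u).
  { intros u v y Hu Hv.
    destruct (classic (u = y)) as [->|Huy]; [right; exact Hv|].
    destruct (classic (v = y)) as [->|Hvy]; [left; exact Hu|].
    apply (Hlin y); split; assumption. }
  set (P := fun a s => D a /\ is_s leT ltK D b a s).
  assert (HPstar : forall a s, P a s -> Tstar leT ltK D b s).
  { intros a s [Da [[Sa Sna] Sl]] [a' [s' [Da' [[[Sa' Sna'] Sl'] [[Hle Hne] Hbs]]]]].
    destruct (Htri a' a) as [Hlt|[Heq|Hlt]].
    - apply Sna. exists a'. auto.
    - subst a'. apply Hne. apply Hanti; [exact Hle|].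
      apply Sl. split; assumption.
    - apply Sna'. exists a. split; [exact Da|split; [exact Hlt|]].
      destruct (Hb_branch a Da) as [_ [Hdown _]].
      exact (Hdown s' s Sa Hle). }
  assert (HPuniq : forall a a' s, P a s -> P a' s -> a = a').
  { intros a a' s [Da [[Sa Sna] _]] [Da' [[Sa' Sna'] _]].
    destruct (Htri a a') as [Hlt|[Heq|Hlt]]; [|exact Heq|].
    - exfalso. apply Sna'. exists a. auto.
    - exfalso. apply Sna. exists a'. auto. }
  set (W := fun t s => exists a, P a s /\ ltT leT s t /\ b a t).
  assert (HG : forall t, {s : T | (Tstar leT ltK D b t /\ s = t) \/
                                   (~ Tstar leT ltK D b t /\ W t s)}).
  { intros t. destruct (excluded_middle_informative (Tstar leT ltK D b t)) as [Ht|Ht].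
    - exists t. left. auto.
    - assert (Hex : exists s, W t s).
      { apply NNPP. intro Hn. apply Ht. intros [a [s [Da [Hs [Hlt Hb]]]]].
        apply Hn. exists s, a. unfold P. auto. }
      destruct (constructive_indefinite_description _ Hex) as [s Hs].
      exists s. right. auto. }
  set (G := fun t => proj1_sig (HG t)).
  assert (HGspec : forall t, (Tstar leT ltK D b t /\ G t = t) \/
                             (~ Tstar leT ltK D b t /\ W t (G t))).
  { intro t. exact (proj2_sig (HG t)). }
  assert (HGstar : forall t, Tstar leT ltK D b (G t)).
  { intro t. destruct (HGspec t) as [[H1 H2]|[_ [a [HP _]]]].
    - rewrite H2. exact H1.
    - exact (HPstar _ _ HP). }
  assert (HGle : forall t, leT (G t) t).
  { intro t. destruct (HGspec t) as [[_ H2]|[_ [a [_ [[Hle _] _]]]]].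
    - rewrite H2. apply Hrefl.
    - exact Hle. }
  exists (fun t => F (G t)). split.
  - intros t Ht. destruct (HGspec t) as [[_ H2]|[Hn _]].
    + rewrite H2. reflexivity.
    + contradiction.
  -
    assert (Hclaim : forall u y, Tstar leT ltK D b u -> leT u y -> F (G y) = F u ->
              y = u \/ exists a, P a u /\ b a y).
    { intros u y Hu Huy HFy.
      assert (HGu : G y = u).
      { apply NNPP. intro Hne.
        destruct (HF (G y) u (HGstar y) Hu Hne HFy) as [H1 H2].
        destruct (Hcomp (G y) u y (HGle y) Huy); contradiction. }
      destruct (HGspec y) as [[_ H2]|[_ [a [HP [_ Hb]]]]].
      - left. congruence.
      - right. exists a. rewrite HGu in HP. auto. }
    intros x y z Hxy Hxz HFy HFz.
    set (u := G x) in *.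
    assert (Huy : leT u y) by (eapply Htrans; [apply HGle|exact Hxy]).
    assert (Huz : leT u z) by (eapply Htrans; [apply HGle|exact Hxz]).
    destruct (Hclaim u y (HGstar x) Huy (eq_sym HFy)) as [Hy|[a [Ha Hby]]].
    + left. rewrite Hy. exact Huz.
    + destruct (Hclaim u z (HGstar x) Huz (eq_sym HFz)) as [Hz|[a' [Ha' Hbz]]].
      * right. rewrite Hz. exact Huy.
      * rewrite <- (HPuniq a a' u Ha Ha') in Hbz.
        destruct Ha as [Da _].
        destruct (Hb_branch a Da) as [Hch _].
        exact (Hch y z Hby Hbz).
Qed.
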